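(* Let $G$ be a finite graph with no isolated vertices such that there is no nontrivial circuit injection $f:G_M\rightarrow B$ with $B$ a binary matroid. Then $G$ is 2-connected.
   Context: Graphs are undirected without loops or multiple edges. $G_M$ is the cycle matroid of $G$ (cells: edges; circuits: edge sets of cycles of $G$). A matroid is a pair $(S,\mathscr{C})$, $S\neq\emptyset$, $\mathscr{C}\subseteq 2^S$, satisfying: (I) $A,B\in\mathscr{C}$, $A\subseteq B$ implies $A=B$; (II) $A,B\in\mathscr{C}$, $a\in A\cap B$, $b\in (A\cup B)\setminus(A\cap B)$ implies there exists $D\in\mathscr{C}$ with $D\subseteq A\cup B$, $a\notin D$, $b\in D$. A matroid is binary if the symmetric difference of any two circuits is a union of pairwise disjoint circuits. A circuit injection $f:G_M\rightarrow B$ is a bijection from $E(G)$ onto the cells of $B$ sending each circuit of $G$ to a circuit of $B$; it is nontrivial if $B$ has a circuit not equal to the image of any circuit of $G$. *)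

(* Defs.v *)
From mathcomp Require Import all_boot.
Set Implicit Arguments. Unset Strict Implicit. Unset Printing Implicit Defensive.

(* A finite simple graph: vertex type V : finType, adjacency e : rel V,
   assumed symmetric and irreflexive (stated as hypotheses of the theorem). *)

Definition edges (V : finType) (e : rel V) : {set {set V}} :=
  [set E : {set V} | [exists x, [exists y, e x y && (E == [set x; y])]]].

Definition cycle_edge_set (V : finType) (e : rel V) (D : {set {set V}}) : Prop :=
  exists s : seq V, [/\ uniq s, 2 < size s, cycle e s &
    D = [set [set x; next s x] | x in s]].

Definition no_isolated_vertices (V : finType) (e : rel V) : Prop :=
  forall v : V, exists u, e v u.

Definition is_matroid (S : finType) (C : {set {set S}}) : Prop :=
  [/\ 0 < #|S|,
      (forall A B, A \in C -> B \in C -> A \subset B -> A = B) &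
      (forall A B a b, A \in C -> B \in C -> a \in A :&: B ->
         b \in (A :|: B) :\: (A :&: B) ->
         exists2 D, D \in C & [/\ D \subset A :|: B, a \notin D & b \in D])].

Definition is_binary (S : finType) (C : {set {set S}}) : Prop :=
  forall A B, A \in C -> B \in C ->
    exists2 P : {set {set S}}, P \subset C &
      trivIset P /\ cover P = (A :\: B) :|: (B :\: A).

Definition circuit_injection (V : finType) (e : rel V) (S : finType)
  (C : {set {set S}}) (f : {set V} -> S) : Prop :=
  [/\ {in edges e &, injective f}, f @: edges e = [set: S] &
      forall D, cycle_edge_set e D -> f @: D \in C].

Definition nontrivial_ci (V : finType) (e : rel V) (S : finType)
  (C : {set {set S}}) (f : {set V} -> S) : Prop :=
  exists2 X, X \in C & forall D, cycle_edge_set e D -> f @: D != X.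

Definition two_connected (V : finType) (e : rel V) : Prop :=
  [/\ 2 < #|V|, (forall x y, connect e x y) &
      forall v x y, x != v -> y != v ->
        connect [rel a b | [&& e a b, a != v & b != v]] x y].

(* Main.v *)
Require Import Defs.
From mathcomp Require Import all_boot.
From Stdlib Require Import Classical.
From mathcomp Require Import zify.
Set Implicit Arguments. Unset Strict Implicit. Unset Printing Implicit Defensive.

Section Abs.
Variables (S K : finType) (Q : K -> {set S}).

Definition Wb (Y : {set S}) := [forall k, ~~ odd #|Y :&: Q k|].

Definition circ : {set {set S}} := [set D : {set S} | [&& D != set0, Wb D &
   [forall D' : {set S}, ((D' \proper D) && (D' != set0)) ==> ~~ Wb D']]].

Definition sdiff (A B : {set S}) := (A :\: B) :|: (B :\: A).

Lemma odd_sdiff (A B : {set S}) : odd #|sdiff A B| = odd #|A| (+) odd #|B|.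
Proof.
rewrite /sdiff cardsU.
have -> : (A :\: B) :&: (B :\: A) = set0.
  by apply/setP=> x; rewrite !inE; case: (x \in A); case: (x \in B); rewrite ?andbF.
rewrite cards0 subn0 -(cardsID B A) -(cardsID A B) [B :&: A]setIC !oddD.
by case: (odd _); case: (odd _); case: (odd _).
Qed.

Lemma Wb_sdiff A B : Wb A -> Wb B -> Wb (sdiff A B).
Proof.
move=> /forallP WA /forallP WB; apply/forallP=> k.
have -> : sdiff A B :&: Q k = sdiff (A :&: Q k) (B :&: Q k).
  by apply/setP=> x; rewrite !inE; case: (x \in A); case: (x \in B); case: (x \in Q k).
by rewrite odd_sdiff; move: (WA k) (WB k); case: (odd _); case: (odd _).
Qed.

Lemma decomp X : Wb X -> exists2 P : {set {set S}}, P \subset circ & trivIset P /\ cover P = X.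
Proof.
have [n] : exists n, #|X| <= n by exists #|X|.
elim: n X => [|n IH] X hX WX.
  exists set0; first exact: sub0set.
  move: hX; rewrite leqn0 cards_eq0 => /eqP ->.
  by rewrite /trivIset /cover !big_set0 cards0.
case: (boolP (X == set0)) => [/eqP -> | Xn0].
  exists set0; first exact: sub0set.
  by rewrite /trivIset /cover !big_set0 cards0.
pose Ds := [pred D : {set S} | [&& D \subset X, D != set0 & Wb D]].
have XDs : Ds X by rewrite /= subxx Xn0 WX.
case: (@arg_minnP _ X Ds (fun D : {set S} => #|D|) XDs) => D /and3P[DX Dn0 WD] minD.
have Dc : D \in circ.
  rewrite inE Dn0 WD /=; apply/forallP=> D'; apply/implyP=> /andP[pD' D'n0].
  apply/negP=> WD'.
  have := minD D'; rewrite /= D'n0 WD' (subset_trans (proper_sub pD') DX) => /(_ isT).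
  by rewrite leqNgt (proper_card pD').
have eX : X :\: D = sdiff X D.
  apply/setP=> x; rewrite !inE; case xD: (x \in D); rewrite /= ?andbF ?orbF //.
  by rewrite (subsetP DX _ xD).
have hX' : #|X :\: D| <= n.
  have := cardsID D X; rewrite (setIidPr DX) => eq.
  have : 0 < #|D| by rewrite card_gt0.
  move: hX; rewrite -eq; lia.
have WX' : Wb (X :\: D) by rewrite eX; exact: Wb_sdiff.
have [P' P'c [tP' cP']] := IH _ hX' WX'.
exists (D |: P').
  by apply/subsetP=> B /setU1P [-> //|/(subsetP P'c)].
split.
  have [] // := @trivIsetU1 _ D P'.
  - move=> B BP'; rewrite -setI_eq0; apply/eqP/setP=> x; rewrite !inE.
    apply/negP=> /andP[xD xB].
    have : x \in cover P' by apply/bigcupP; exists B.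
    by rewrite cP' !inE xD.
  - apply/negP=> /(subsetP P'c); by rewrite inE eqxx.
rewrite /cover bigcup_setU big_set1 -/(cover P') cP'.
apply/setP=> x; rewrite !inE; case xD: (x \in D); rewrite /= ?andbF ?orbF //.
by rewrite (subsetP DX _ xD).
Qed.

Lemma circ_matroid : 0 < #|S| -> is_matroid circ.
Proof.
move=> S0; split => //.
  move=> A B; rewrite !inE => /and3P[An0 WA _] /and3P[_ _ /forallP mB] AB.
  apply/eqP; apply: contraT => nAB.
  have := mB A; by rewrite properEneq nAB AB An0 WA.
move=> A B a b Ac Bc aAB bAB.
have WA : Wb A by move: Ac; rewrite inE => /and3P[].
have WB : Wb B by move: Bc; rewrite inE => /and3P[].
have [P Pc [_ cP]] := decomp (Wb_sdiff WA WB).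
have : b \in cover P.
  rewrite cP; move: bAB; rewrite !inE.
  by case: (b \in A); case: (b \in B).
case/bigcupP=> D DP bD; exists D; first exact: (subsetP Pc).
split => //.
  apply/subsetP=> x xD; have : x \in cover P by apply/bigcupP; exists D.
  by rewrite cP !inE; case: (x \in A); case: (x \in B).
apply/negP=> aD; have : a \in cover P by apply/bigcupP; exists D.
by rewrite cP; move: aAB; rewrite !inE => /andP[-> ->].
Qed.

Lemma circ_binary : is_binary circ.
Proof.
move=> A B Ac Bc.
have WA : Wb A by move: Ac; rewrite inE => /and3P[].
have WB : Wb B by move: Bc; rewrite inE => /and3P[].
have [P Pc [tP cP]] := decomp (Wb_sdiff WA WB).
by exists P.
Qed.
End Abs.


Section Cyc.
Variables (V : finType) (s : seq V).
Hypotheses (us : uniq s) (ss : 2 < size s).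

Definition Ed x := [set x; next s x].
Definition Dset := [set Ed x | x in s].

Lemma next_neq x : x \in s -> next s x != x.
Proof.
case/rot_to=> i p eq.
have u : uniq (x :: p) by rewrite -eq rot_uniq.
have sz : 2 < size (x :: p) by rewrite -eq size_rot.
rewrite -(next_rot i us) eq; clear eq.
case: p u sz => [|d p] //= /andP[]; rewrite inE negb_or => /andP[xd _] _ _.
by rewrite eqxx eq_sym.
Qed.

Lemma next2_neq x : x \in s -> next s (next s x) != x.
Proof.
case/rot_to=> i p eq.
have u : uniq (x :: p) by rewrite -eq rot_uniq.
have sz : 2 < size (x :: p) by rewrite -eq size_rot.
rewrite -!(next_rot i us) eq; clear eq.
case: p u sz => [|d [|t p]] //= /andP[]; rewrite !inE !negb_or => /andP[xd /andP[xt _]].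
move=> /and3P[/andP[dt _] _ _] _.
have dx : (d == x) = false by rewrite eq_sym (negbTE xd).
by rewrite eqxx dx eqxx eq_sym.
Qed.


Lemma deg_cycle c : c \in s -> #|[set E in Dset | c \in E]| = 2.
Proof.
move=> cs.
have -> : [set E in Dset | c \in E] = [set Ed c; Ed (prev s c)].
  apply/setP=> E; rewrite !inE; apply/andP/orP.
  - case=> /imsetP[x xs ->]; rewrite !inE => /orP[/eqP->|/eqP cx]; [left|right] => //.
    by rewrite cx (prev_next us).
  - case=> /eqP->; split.
    + exact: imset_f.
    + by rewrite !inE eqxx.
    + by apply: imset_f; rewrite mem_prev.
    + by rewrite !inE (next_prev us) eqxx orbT.
rewrite cards2; suff -> : Ed c != Ed (prev s c) by [].
apply/eqP=> h.
have : next s c \in Ed (prev s c) by rewrite -h !inE eqxx orbT.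
rewrite !inE => /orP[/eqP h1|/eqP h2].
  by move: (next2_neq cs); rewrite h1 (next_prev us) eqxx.
by move: (next_neq cs); rewrite h2 (next_prev us) eqxx.
Qed.

Lemma deg_cycle0 c : c \notin s -> [set E in Dset | c \in E] = set0.
Proof.
move=> cs; apply/setP=> E; rewrite !inE; apply/negP=> /andP[/imsetP[x xs ->]].
rewrite !inE => /orP[/eqP cx|/eqP cx]; move: cs; by rewrite cx ?mem_next xs.
Qed.

Lemma deg1_not_cycle (Y : {set {set V}}) c :
  #|[set E in Y | c \in E]| = 1 -> Y != Dset.
Proof.
move=> h; apply/eqP=> eY; move: h; rewrite eY.
case: (boolP (c \in s)) => cs; first by rewrite deg_cycle.
by rewrite deg_cycle0 // cards0.
Qed.

Lemma cycle_min (Y : {set {set V}}) : Y \subset Dset -> Y != set0 -> Y != Dset ->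
  exists2 x, x \in s & [set E in Y | next s x \in E] = [set Ed x].
Proof.
move=> YD Yn0 nYD.
case: (boolP [exists x, [&& x \in s, Ed x \in Y & Ed (next s x) \notin Y]]).
  case/existsP=> x /and3P[xs xY nY]; exists x => //.
  apply/setP=> E; rewrite !inE; apply/andP/eqP.
    case=> EY; have := subsetP YD _ EY; case/imsetP=> z zs Ez; move: EY; rewrite Ez.
    rewrite !inE => zY /orP[/eqP h|/eqP h].
      by move: nY; rewrite h zY.
    by rewrite (can_inj (prev_next us) h).
  by move=> ->; rewrite xY !inE eqxx orbT.
rewrite negb_exists => /forallP H.
have cl : forall x, x \in s -> Ed x \in Y -> Ed (next s x) \in Y.
  move=> x xs xY; move: (H x); rewrite xs xY /=; by rewrite negbK.
case/set0Pn: Yn0 => E0 E0Y.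
case/imsetP: (subsetP YD _ E0Y) => x0 x0s E0e.
have all : forall z, z \in s -> Ed z \in Y.
  case/rot_to: x0s => i p eq.
  have u : uniq (x0 :: p) by rewrite -eq rot_uniq.
  have nx : forall y, next s y = next (x0 :: p) y by move=> y; rewrite -eq (next_rot i us).
  have ms : forall y, (y \in s) = (y \in x0 :: p) by move=> y; rewrite -eq mem_rot.
  have key : forall j, j < size (x0 :: p) -> Ed (nth x0 (x0 :: p) j) \in Y.
    elim=> [|j IH] hj; first by rewrite /= -E0e.
    have hj' : j < size (x0 :: p) by apply: ltnW.
    have := cl _ _ (IH hj'); rewrite ms mem_nth // => /(_ isT).
    rewrite nx next_nth mem_nth // index_uniq //.
  move=> z; rewrite ms => zs.
  by rewrite -(nth_index x0 zs) key // index_mem.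
case/negP: nYD; rewrite eqEsubset YD /=.
by apply/subsetP=> E /imsetP[z zs ->]; apply: all.
Qed.
End Cyc.


Section Cross.
Variables (V : finType) (g : V -> V).

Definition cross (k : V) (E : {set V}) :=
  [exists a in E, exists b in E, (g a == k) && (g b != k)].

Lemma cross2 k a b : cross k [set a; b] = (g a == k) (+) (g b == k).
Proof.
rewrite /cross; case ha: (g a == k); case hb: (g b == k) => /=.
- apply/negbTE/negP => /existsP[u /andP[]]; rewrite !inE => /orP[]/eqP-> /existsP[w /andP[]];
  by rewrite !inE => /orP[]/eqP-> /andP[]; rewrite ?ha ?hb.
- apply/existsP; exists a; rewrite !inE eqxx /=; apply/existsP; exists b.
  by rewrite !inE eqxx orbT ha hb.
- apply/existsP; exists b; rewrite !inE eqxx orbT /=; apply/existsP; exists a.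
  by rewrite !inE eqxx ha hb.
- apply/negbTE/negP => /existsP[u /andP[]]; rewrite !inE => /orP[]/eqP-> /existsP[w /andP[]];
  by rewrite !inE => /orP[]/eqP-> /andP[]; rewrite ?ha ?hb.
Qed.

Variables (s : seq V).
Hypotheses (us : uniq s) (ss : 2 < size s) (ginj : {in s &, injective g}).

Lemma cross_cycle c E : E \in Dset s -> c \in s -> cross (g c) E = (c \in E).
Proof.
case/imsetP=> x xs -> cs; rewrite cross2 !inE.
have nxs : next s x \in s by rewrite mem_next.
rewrite (inj_in_eq ginj xs cs) (inj_in_eq ginj nxs cs).
have nn := next_neq us ss xs.
case: (eqVneq x c) => [<-|xc]; first by rewrite (negbTE nn).
by rewrite /= eq_sym.
Qed.

Lemma cycle_even k : ~~ odd #|[set E in Dset s | cross k E]|.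
Proof.
case: (boolP (has (fun c => g c == k) s)).
  case/hasP=> c cs /eqP <-.
  have -> : [set E in Dset s | cross (g c) E] = [set E in Dset s | c \in E].
    by apply/setP=> E; rewrite !inE; case ED: (E \in Dset s) => //=; rewrite cross_cycle.
  by rewrite deg_cycle.
move/hasPn=> H.
have -> : [set E in Dset s | cross k E] = set0.
  apply/setP=> E; rewrite !inE; apply/negP=> /andP[/imsetP[x xs ->]].
  by rewrite cross2 (negbTE (H _ xs)) (negbTE (H _ _)) // mem_next.
by rewrite cards0.
Qed.

Lemma cycle_odd (Y : {set {set V}}) : Y \subset Dset s -> Y != set0 -> Y != Dset s ->
  exists k, odd #|[set E in Y | cross k E]|.
Proof.
move=> YD Yn0 nYD; have [x xs eq] := cycle_min us YD Yn0 nYD.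
exists (g (next s x)).
have -> : [set E in Y | cross (g (next s x)) E] = [set E in Y | next s x \in E].
  apply/setP=> E; rewrite !inE; case EY: (E \in Y) => //=.
  by rewrite cross_cycle ?(subsetP YD) // mem_next.
by rewrite eq cards1.
Qed.
End Cross.


Section Construct.
Variables (V : finType) (e : rel V).
Hypothesis HH : forall (S : finType) (C : {set {set S}}) (f : {set V} -> S),
      is_matroid C -> is_binary C -> circuit_injection e C f ->
      ~ nontrivial_ci e C f.

Lemma edge_in a b : e a b -> [set a; b] \in edges e.
Proof. by move=> eab; rewrite inE; apply/existsP; exists a; apply/existsP; exists b; rewrite eab eqxx. Qed.

Lemma construct (g : V -> V) (Y0 : {set {set V}}) :
  Y0 \subset edges e -> Y0 != set0 ->
  (forall s, uniq s -> 2 < size s -> cycle e s -> {in s &, injective g}) ->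
  (forall k, ~~ odd #|[set E in Y0 | cross g k E]|) ->
  (forall Y : {set {set V}}, Y \proper Y0 -> Y != set0 -> exists k, odd #|[set E in Y | cross g k E]|) ->
  (exists c, #|[set E in Y0 | c \in E]| = 1) -> False.
Proof.
move=> Y0E Y0n0 R1 R2 R3 [c dc].
pose S := {E : {set V} | E \in edges e}.
have [E0 E0Y] := set0Pn _ Y0n0.
have E0e : E0 \in edges e := subsetP Y0E _ E0Y.
pose e0 : S := exist _ E0 E0e.
pose f := fun E : {set V} => insubd e0 E.
pose Q := fun k : V => [set s0 : S | cross g k (val s0)].
have fK : {in edges e, cancel f val} := insubdK e0.
have bridge : forall (Y' : {set S}) k,
    #|Y' :&: Q k| = #|[set E in val @: Y' | cross g k E]|.
  move=> Y' k; have -> : [set E in val @: Y' | cross g k E] = val @: (Y' :&: Q k).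
    apply/setP=> E; rewrite inE; apply/andP/imsetP.
      by case=> /imsetP[y yY ->] cr; exists y => //; rewrite !inE yY.
    by case=> y; rewrite !inE => /andP[yY cr] ->; split => //; exact: imset_f.
  by rewrite card_imset //; exact: val_inj.
have valf : forall Z : {set {set V}}, Z \subset edges e -> val @: (f @: Z) = Z.
  move=> Z ZE; rewrite -imset_comp -[RHS]imset_id; apply: eq_in_imset => E EZ /=.
  exact: fK (subsetP ZE _ EZ).
have isC : forall Z : {set {set V}}, Z \subset edges e -> Z != set0 ->
    (forall k, ~~ odd #|[set E in Z | cross g k E]|) ->
    (forall Y : {set {set V}}, Y \proper Z -> Y != set0 -> exists k, odd #|[set E in Y | cross g k E]|) ->
    f @: Z \in circ Q.
  move=> Z ZE Zn0 ev mn; rewrite inE imset_eq0 Zn0 /=; apply/andP; split.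
    by apply/forallP=> k; rewrite bridge valf.
  apply/forallP=> D'; apply/implyP=> /andP[pD D'n0].
  have pY : val @: D' \proper Z.
    rewrite -(valf _ ZE); apply: imset_proper => //; exact: (in2W val_inj).
  have D0 : val @: D' != set0 by rewrite imset_eq0.
  have [k ok] := mn _ pY D0.
  by apply/forallPn; exists k; rewrite negbK bridge.
have cycE : forall s, cycle e s -> Dset s \subset edges e.
  by move=> s cs; apply/subsetP=> E /imsetP[x xs ->]; apply: edge_in; exact: next_cycle.
apply: (HH (C := circ Q) (f := f)).
- by apply: circ_matroid; apply/card_gt0P; exists e0.
- exact: circ_binary.
- split.
  + by move=> E1 E2 h1 h2 eq; rewrite -(fK _ h1) -(fK _ h2) eq.
  + apply/setP=> y; rewrite in_setT; apply/imsetP; exists (val y); first exact: valP.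
    by apply: val_inj; rewrite fK //; exact: valP.
  + move=> D [s [us ss cs ->]].
    have eD : [set [set x; next s x] | x in s] = Dset s by [].
    rewrite eD; apply: isC.
    * exact: cycE.
    * move: ss; case: (s) => [|x s'] // _; apply/set0Pn; exists (Ed (x :: s') x); apply: imset_f; exact: mem_head.
    * exact: cycle_even (R1 _ us ss cs).
    * move=> Y pY Yn0; exact: (cycle_odd us ss (R1 _ us ss cs) (proper_sub pY) Yn0 (proper_neq pY)).
- exists (f @: Y0); first exact: isC.
  move=> D [s [us ss cs ->]]; apply/eqP => eq.
  have : Y0 = Dset s by rewrite -(valf _ Y0E) -eq valf //; exact: cycE.
  by move=> eY; move: (deg1_not_cycle us ss dc); rewrite eY eqxx.
Qed.
End Construct.


Section Sep.
Variables (V : finType) (e : rel V) (sym : symmetric e).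

Lemma constK (K P : pred V) : (forall a b, K a -> e a b -> P a -> P b -> K b) ->
  forall a q, path e a q -> P a -> all P q -> all (fun b => K b == K a) q.
Proof.
move=> cl a q; elim: q a => [|b q IH] a //= /andP[eab pq] Pa /andP[Pb Pq].
have Kab : K b = K a.
  by apply/idP/idP => [Kb|Ka]; [apply: (cl b a) => //; rewrite sym | apply: (cl a b)].
by rewrite Kab eqxx /=; have := IH b pq Pb Pq; rewrite Kab.
Qed.

Lemma sep (K P : pred V) : (forall a b, K a -> e a b -> P a -> P b -> K b) ->
  forall s u w, uniq s -> cycle e s ->
  {in s &, forall z1 z2, ~~ P z1 -> ~~ P z2 -> z1 = z2} ->
  u \in s -> w \in s -> P u -> P w -> K u = K w.
Proof.
move=> cl s u w us cs bad1 uin win Pu Pw.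
case: (boolP (has (predC P) s)).
- case/hasP=> z zs nPz; have zs' := zs; case/rot_to: zs' => i p eq.
  have cs' : cycle e (z :: p) by rewrite -eq rot_cycle.
  have us' : uniq (z :: p) by rewrite -eq rot_uniq.
  have ms : forall y, (y \in s) = (y \in z :: p) by move=> y; rewrite -eq mem_rot.
  have allP' : all P p.
    apply/allP=> y yp; apply: contraT => nPy.
    have ys : y \in s by rewrite ms inE yp orbT.
    have yz := bad1 _ _ ys zs nPy nPz.
    by move: us'; rewrite /= -yz yp.
  have up : u \in p.
    move: uin; rewrite ms inE => /orP[/eqP uz|//]; by rewrite uz (negbTE nPz) in Pu.
  have wp : w \in p.
    move: win; rewrite ms inE => /orP[/eqP wz|//]; by rewrite wz (negbTE nPz) in Pw.
  move: cs' us' allP' up wp; clear eq ms; case: p => [//|p0 p1] cs' _ /= /andP[P0 P1] up wp.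
  move: cs'; rewrite /= rcons_path => /andP[_ /andP[pth _]].
  have := constK cl pth P0 P1 => /allP H.
  have KK : forall y, y \in p0 :: p1 -> K y = K p0.
    by move=> y; rewrite inE => /orP[/eqP->//|/H /eqP].
  by rewrite (KK _ up) (KK _ wp).
- rewrite has_predC negbK => /allP allPs.
  case/rot_to: uin => i p eq.
  have cs' : cycle e (u :: p) by rewrite -eq rot_cycle.
  have ms : forall y, (y \in s) = (y \in u :: p) by move=> y; rewrite -eq mem_rot.
  move: cs'; rewrite /= rcons_path => /andP[pth _].
  have Pp : all P p by apply/allP=> y yp; apply: allPs; rewrite ms inE yp orbT.
  have := constK cl pth Pu Pp => /allP H.
  move: win; rewrite ms inE => /orP[/eqP->//|/H /eqP ->] //.
Qed.
End Sep.


Section SetH.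
Variable T : finType.

Lemma card_sel1 (E1 : T) (p : pred T) : #|[set E in [set E1] | p E]| = p E1.
Proof.
case pE: (p E1).
  have -> : [set E in [set E1] | p E] = [set E1].
    by apply/setP=> E; rewrite !inE; case: eqP => // ->; rewrite pE.
  by rewrite cards1.
have -> : [set E in [set E1] | p E] = set0.
  by apply/setP=> E; rewrite !inE; case: eqP => // ->; rewrite pE.
by rewrite cards0.
Qed.

Lemma card_sel2 (E1 E2 : T) (p : pred T) : E1 != E2 ->
  #|[set E in [set E1; E2] | p E]| = p E1 + p E2.
Proof.
move=> n12.
have -> : [set E in [set E1; E2] | p E] =
          [set E in [set E1] | p E] :|: [set E in [set E2] | p E].
  by apply/setP=> E; rewrite !inE andb_orl.
rewrite cardsU !card_sel1.
have -> : [set E in [set E1] | p E] :&: [set E in [set E2] | p E] = set0.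
  apply/setP=> E; rewrite !inE; apply/negP=> /andP[/andP[/eqP -> _] /andP[/eqP h _]].
  by rewrite h eqxx in n12.
by rewrite cards0 subn0.
Qed.

Lemma proper_set1 (A : {set T}) x : A \proper [set x] -> A != set0 -> False.
Proof.
by rewrite properEcard cards1 ltnS leqn0 cards_eq0 => /andP[_ ->].
Qed.

Lemma proper_set2 (A : {set T}) x y : A \proper [set x; y] -> A != set0 ->
  A = [set x] \/ A = [set y].
Proof.
move=> pA An0; have sA := proper_sub pA; have nA := proper_neq pA.
case xA: (x \in A); case yA: (y \in A).
- case/negP: nA; rewrite eqEsubset sA /=.
  by apply/subsetP=> z; rewrite !inE => /orP[]/eqP->.
- left; apply/setP=> z; rewrite inE; apply/idP/eqP => [zA|->//].
  by move: (subsetP sA _ zA); rewrite !inE => /orP[]/eqP // zy; rewrite -zy zA in yA.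
- right; apply/setP=> z; rewrite inE; apply/idP/eqP => [zA|->//].
  by move: (subsetP sA _ zA); rewrite !inE => /orP[]/eqP // zx; rewrite -zx zA in xA.
- case/set0Pn: An0 => z zA; move: (subsetP sA _ zA).
  by rewrite !inE => /orP[]/eqP zx; [rewrite -zx zA in xA | rewrite -zx zA in yA].
Qed.
End SetH.


Section Cases.
Variables (V : finType) (e : rel V).
Hypotheses (sym : symmetric e) (irr : irreflexive e)
  (noiso : no_isolated_vertices e).
Hypothesis HH : forall (S : finType) (C : {set {set S}}) (f : {set V} -> S),
      is_matroid C -> is_binary C -> circuit_injection e C f ->
      ~ nontrivial_ci e C f.

Lemma neq_edge a b : e a b -> a != b.
Proof. by apply: contraTneq => ->; rewrite irr. Qed.

Lemma caseA (a0 : V) : #|V| <= 2 -> False.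
Proof.
move=> V2; have [a1 ea] := noiso a0.
apply: (construct HH (g := fun _ => a0) (Y0 := [set [set a0; a1]])).
- by rewrite sub1set edge_in.
- by apply/set0Pn; exists [set a0; a1]; rewrite set11.
- move=> s us ss _; exfalso.
  have := leq_trans (max_card (mem s)) V2; rewrite (card_uniqP us) => h. by have := leq_trans ss h.
- by move=> k; rewrite card_sel1 cross2; case: (a0 == k).
- by move=> Y pY Yn0; case: (proper_set1 pY Yn0).
- by exists a0; rewrite card_sel1 !inE eqxx.
Qed.

Lemma caseB x y : ~~ connect e x y -> False.
Proof.
move=> nxy; have [x' ex] := noiso x; have [y' ey] := noiso y.
pose K := fun z => connect e x z.
have Kx : K x by exact: connect0.
have Kx' : K x' by exact: connect1.
have nKy : ~~ K y by [].
have nKy' : ~~ K y'.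
  apply: contra nKy => Ky'; apply: connect_trans Ky' _; apply: connect1; by rewrite sym.
have nK : forall u w, K u -> ~~ K w -> u != w by move=> u w Ku; apply: contraNneq => <-.
have xy := nK _ _ Kx nKy; have xy' := nK _ _ Kx nKy'.
have x'y := nK _ _ Kx' nKy; have x'y' := nK _ _ Kx' nKy'.
have xx' := neq_edge ex; have yy' := neq_edge ey.
pose g := fun z => if z == y then x else if z == y' then x' else z.
have gx : g x = x by rewrite /g (negbTE xy) (negbTE xy').
have gx' : g x' = x' by rewrite /g (negbTE x'y) (negbTE x'y').
have gy : g y = x by rewrite /g eqxx.
have gy' : g y' = x' by rewrite /g eq_sym (negbTE yy') eqxx.
have E12 : [set x; x'] != [set y; y'].
  apply/eqP=> h; have : x \in [set y; y'] by rewrite -h set21.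
  by rewrite !inE (negbTE xy) (negbTE xy').
apply: (construct HH (g := g) (Y0 := [set [set x; x']; [set y; y']])).
- by rewrite subUset !sub1set !edge_in.
- by apply/set0Pn; exists [set x; x']; rewrite set21.
- move=> s us ss cs u w uin win guw; apply/eqP; apply: contraT => uw.
  have KK : K u = K w.
    apply: (sep sym (P := predT)) uin win _ _ => //.
    by move=> a b Ka eab _ _; apply: connect_trans Ka (connect1 eab).
  have : K u != K w.
    move: guw uw; rewrite /g.
    do 4 (try case: ifP => [/eqP->|_]).
    - by move=> _ /eqP.
    - by move=> h; rewrite h eqxx in xx'.
    - by move=> <- _; rewrite Kx (negbTE nKy).
    - by move=> h; rewrite h eqxx in xx'.
    - by move=> _ /eqP.
    - by move=> <- _; rewrite Kx' (negbTE nKy').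
    - by move=> -> _; rewrite Kx (negbTE nKy).
    - by move=> -> _; rewrite Kx' (negbTE nKy').
    - by move=> -> /eqP.
  by rewrite KK eqxx.
- move=> k; rewrite card_sel2 // !cross2 gx gx' gy gy'.
  by case: (_ (+) _).
- move=> Y pY Yn0; exists x; case: (proper_set2 pY Yn0) => ->;
  by rewrite card_sel1 cross2 ?gx ?gx' ?gy ?gy' eqxx eq_sym (negbTE xx').
- exists x; rewrite card_sel2 // !inE eqxx /=.
  by rewrite (negbTE xy) (negbTE xy').
Qed.

Lemma reach (v : V) (Z : pred V) a : Z a -> a != v ->
  (forall a b, Z a -> a != v -> e a b -> b != v -> Z b) ->
  connect e a v -> exists2 z, Z z & (z != v) && e z v.
Proof.
move=> Za av cl /connectP[p pth lst].
elim: p a Za av pth lst => [|b p IH] a Za av /=; first by move=> _ va; rewrite va eqxx in av.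
case/andP=> eab pth lst.
case: (eqVneq b v) => [bv|bv]; first by exists a => //; rewrite av -bv eab.
exact: (IH b (cl a b Za av eab bv) bv pth lst).
Qed.

Lemma caseC (v x y : V) : (forall a b, connect e a b) -> x != v -> y != v ->
  ~~ connect [rel a b | [&& e a b, a != v & b != v]] x y -> False.
Proof.
move=> conn xv yv nxy.
set r := [rel a b | [&& e a b, a != v & b != v]] in nxy.
pose K := fun z => connect r x z.
have cl : forall a b, K a -> e a b -> a != v -> b != v -> K b.
  by move=> a b Ka eab av bv; apply: connect_trans Ka (connect1 _); rewrite /r /= eab av bv.
have [k Kk /andP[kv ekv]] : exists2 k, K k & (k != v) && e k v.
  apply: (reach (Z := K)) (conn x v) => //; first exact: connect0.
  by move=> a b Ka av eab bv; apply: cl Ka eab av bv.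
have [l nKl /andP[lv elv]] : exists2 l, ~~ K l & (l != v) && e l v.
  apply: (reach (Z := fun z => ~~ K z)) (conn y v) => //.
  move=> a b nKa av eab bv; apply: contra nKa => Kb; apply: cl Kb _ bv av.
  by rewrite sym.
have kl : k != l by apply: contraTneq Kk => ->.
have gk : (if k == l then k else k) = k by case: ifP.
pose g := fun z => if z == l then k else z.
have gk' : g k = k by rewrite /g (negbTE kl).
have gv : g v = v by rewrite /g eq_sym (negbTE lv).
have gl : g l = k by rewrite /g eqxx.
have E12 : [set k; v] != [set l; v].
  apply/eqP=> h; have : k \in [set l; v] by rewrite -h set21.
  by rewrite !inE (negbTE kl) (negbTE kv).
apply: (construct HH (g := g) (Y0 := [set [set k; v]; [set l; v]])).
- by rewrite subUset !sub1set !edge_in.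
- by apply/set0Pn; exists [set k; v]; rewrite set21.
- move=> s us ss cs u w uin win guw; apply/eqP; apply: contraT => uw.
  have H1 : [/\ u != v, w != v & K u != K w].
    move: guw uw; rewrite /g.
    do 2 (try case: ifP => [/eqP->|_]).
    - by move=> _ /eqP.
    - by move=> <- _; rewrite Kk (negbTE nKl) lv kv.
    - by move=> -> _; rewrite Kk (negbTE nKl) lv kv.
    - by move=> -> /eqP.
  case: H1 => uv wv nK.
  have KK : K u = K w.
    apply: (@sep V e sym K (fun z => z != v) _ s u w us cs _ uin win uv wv).
      by move=> a b Ka eab av bv; apply: cl Ka eab av bv.
    by move=> z1 z2 _ _; rewrite !negbK => /eqP-> /eqP->.
  by rewrite KK eqxx in nK.
- move=> kk; rewrite card_sel2 // !cross2 gk' gv gl.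
  by case: (_ (+) _).
- move=> Y pY Yn0; exists k; case: (proper_set2 pY Yn0) => ->;
  by rewrite card_sel1 cross2 ?gk' ?gv ?gl eqxx eq_sym (negbTE kv).
- exists k; rewrite card_sel2 // !inE eqxx /=.
  by rewrite (negbTE kl) (negbTE kv).
Qed.
End Cases.


Theorem corollary2p1 (V : finType) (e : rel V) :
  symmetric e -> irreflexive e -> 0 < #|V| ->
  no_isolated_vertices e ->
  (forall (S : finType) (C : {set {set S}}) (f : {set V} -> S),
      is_matroid C -> is_binary C -> circuit_injection e C f ->
      ~ nontrivial_ci e C f) ->
  two_connected e.
Proof.
move=> sym irr Vpos noiso HH.
apply: NNPP => N.
have [a0 _] := card_gt0P Vpos.
case: (leqP #|V| 2) => [V2|V3]; first exact: (caseA noiso HH a0 V2).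
case: (classic (forall x y, connect e x y)) => [conn|nconn]; last first.
  have [x nx] := not_all_ex_not _ _ nconn; have [y nxy] := not_all_ex_not _ _ nx.
  by apply: (caseB sym irr noiso HH (x:=x) (y:=y)); apply/negP.
case: (classic (forall v x y, x != v -> y != v ->
   connect [rel a b | [&& e a b, a != v & b != v]] x y)) => [c2|nc2].
  by apply: N; split.
have [v nv] := not_all_ex_not _ _ nc2; have [x nx] := not_all_ex_not _ _ nv.
have [y ny] := not_all_ex_not _ _ nx.
have [xv ny'] := imply_to_and _ _ ny; have [yv nc] := imply_to_and _ _ ny'.
by apply: (caseC sym HH conn xv yv); apply/negP.
Qed.
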